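(* Let $k\in\mathbb{Z}$ and $\imath\in\mathbb{Z}_{>1}$. The rational polygon $\mathrm{conv}((0,0),(k,\imath),(k+1/3,\imath))$ is canonical if and only if either $k+1$ is a multiple of $\imath$, or $\imath$ is odd and $k\equiv\frac{\imath-1}{2}\bmod\imath$.
   Context: For rationals $a<b$ and $\imath\in\mathbb{Z}_{>1}$, the polygon $\mathrm{conv}((0,0),(a,\imath),(b,\imath))$ is called canonical if every lattice point $p\neq(0,0)$ in it satisfies $p_2=\imath$. *)

(* Defs.v *)
From HB Require Import structures.
From mathcomp Require Import all_boot all_order all_algebra.
Set Implicit Arguments. Unset Strict Implicit. Unset Printing Implicit Defensive.
Import Order.TTheory GRing.Theory Num.Theory.
Local Open Scope ring_scope.

Definition in_conv3 (u v w p : rat * rat) : Prop :=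
  exists l1 l2 l3 : rat,
    [/\ 0 <= l1, 0 <= l2, 0 <= l3 & l1 + l2 + l3 = 1] /\
    p.1 = l1 * u.1 + l2 * v.1 + l3 * w.1 /\
    p.2 = l1 * u.2 + l2 * v.2 + l3 * w.2.

Definition canonical_tri (a b : rat) (i : int) : Prop :=
  forall x y : int,
    in_conv3 (0, 0) (a, i%:~R) (b, i%:~R) (x%:~R, y%:~R) ->
    (x, y) <> (0%R, 0%R) -> y = i.

(* Main.v *)
Require Import Defs.
From Stdlib Require Classical_Prop.
From HB Require Import structures.
From mathcomp Require Import all_boot all_order all_algebra.
From mathcomp Require Import zify ring lra.
Import Order.TTheory GRing.Theory Num.Theory.
Local Open Scope ring_scope.
Lemma int_canon (k i x y : int) : 1 < i ->
  ((i %| k + 1)%Z \/ (modz i 2 = 1 /\ modz k i = modz (divz (i - 1) 2) i)) ->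
  1 <= y -> y <= i - 1 -> 0 <= 3*(x*i - y*k) -> 3*(x*i-y*k) <= y -> False.
Proof.
move=> hi [/dvdzP [c hc]|[hi2 hk]] y1 yi h0 h1.
  have ek : k = c * i - 1 by rewrite -hc; ring.
  rewrite ek in h0 h1.
  have [d|d] := lerP 0 (x - y*c); nia.
have ei := divz_eq i 2; rewrite hi2 in ei.
set j := (i %/ 2)%Z in ei hk.
have ej : ((i - 1) %/ 2)%Z = j by rewrite ei addrK mulzK.
rewrite ej in hk.
have /eqP := hk; rewrite eqz_mod_dvd => /dvdzP [c hc].
have ek : k = c * i + j by rewrite -hc; ring.
rewrite ek in h0 h1.
have [d|d] := lerP 0 (2*(x - y*c) - y); nia.
Qed.
Lemma int_noncanon (k i : int) : 1 < i ->
  ~ ((i %| k + 1)%Z \/ (modz i 2 = 1 /\ modz k i = modz (divz (i - 1) 2) i)) ->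
  exists x y : int, [/\ 1 <= y, y <= i - 1, 0 <= 3*(x*i - y*k) & 3*(x*i-y*k) <= y].
Proof.
move=> hi hn.
have hgi := dvdz_gcdr k i; have hgk := dvdz_gcdl k i.
have g0 : 0 <= gcdz k i by [].
have [g1|g1] := lerP (gcdz k i) 1; last first.
  case/dvdzP: hgi => y hy; case/dvdzP: hgk => x hx.
  set g := gcdz k i in hx hy g1 g0.
  have yp : 0 < y by nia.
  have e0 : x * i - y * k = 0 by rewrite hx hy; ring.
  exists x, y; rewrite e0; split => //; nia.
have [gz|gz] := eqVneq (gcdz k i) 0.
  move: gz => /eqP; rewrite gcdz_eq0 => /andP [_ /eqP]; lia.
have g1' : gcdz k i = 1 by lia.
case: (Bezoutz k i) => u [v]; rewrite g1' => huv.
have ey := divz_eq (- u) i.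
have i0 : i != 0 by lia.
have y0 := modz_ge0 (- u) i0.
have y1 : (((- u) %% i)%Z < i) by apply: ltz_pmod; lia.
set y := ((- u) %% i)%Z in ey y0 y1.
set q := ((- u) %/ i)%Z in ey.
have hky : k * y = -1 + i * (v - k * q).
  have -> : y = - u - q * i by rewrite ey; ring.
  by rewrite -huv; ring.
move: hky; move: (v - k * q) => x hky.
clearbody y q; clear ey huv.
have [y3|y3] := lerP 3 y.
  have e1 : x * i - y * k = 1 by rewrite (mulrC y) hky ; ring.
  exists x, y; rewrite e1; split => //; lia.
exfalso; apply: hn.
have [yz|yz] := eqVneq y 0.
  rewrite yz mulr0 in hky; have [xp|xp] := lerP x 0; nia.
have [yo|yo] := eqVneq y 1.
  left; apply/dvdzP; exists x; rewrite yo in hky; lia.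
have y2 : y = 2 by lia.
rewrite y2 in hky.
have ex := divz_eq x 2.
have xm0 := @modz_ge0 x 2 isT.
have xm1 := @ltz_pmod x 2 isT.
have xm : (x %% 2)%Z = 1.
  have [h|h] := eqVneq (x %% 2)%Z 0; last lia.
  rewrite h in ex; nia.
rewrite xm in ex; set s := (x %/ 2)%Z in ex.
set j := k - i * s.
have eij : i = j * 2 + 1 by rewrite /j; nia.
right; split.
  by rewrite eij modzMDl.
have -> : ((i - 1) %/ 2)%Z = j by rewrite eij addrK mulzK.
have -> : k = s * i + j by rewrite /j; ring.
by rewrite modzMDl.
Qed.

Theorem mainTheorem10 (k i : int) (hi : 1 < i) :
  canonical_tri (k%:~R) (k%:~R + 3%:R^-1) i <->
  ((i %| k + 1)%Z \/ (modz i 2 = 1 /\ modz k i = modz (divz (i - 1) 2) i)).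
Proof.
have Ip : 0 < (i%:~R : rat) by rewrite ltr0z; lia.
have Inz : (i%:~R : rat) != 0 by rewrite gt_eqF.
split.
  move=> hc; case: (Classical_Prop.classic (((i %| k + 1)%Z \/ (modz i 2 = 1 /\ modz k i = modz (divz (i - 1) 2) i)))) => // hn; exfalso.
  have [x [y [y1 yi h0 h1]]] := @int_noncanon k i hi hn.
  set r := x * i - y * k in h0 h1.
  have hr : (r%:~R : rat) = x%:~R * i%:~R - y%:~R * k%:~R by rewrite /r intrB !intrM.
  have H : y <> i by lia.
  apply: H; apply: (hc x y); last first.
    by case=> _ y0; rewrite y0 in y1.
  have Y1 : (1 : rat) <= y%:~R by rewrite -(ler_int rat) in y1.
  have YI : (y%:~R : rat) <= i%:~R - 1 by have : y <= i - 1 by []; rewrite -(ler_int rat) intrB; apply.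
  have R0 : (0 : rat) <= 3 * r%:~R by rewrite -[3]/(3%:~R) -intrM ler0z.
  have R1 : (3 * r%:~R : rat) <= y%:~R by rewrite -[3]/(3%:~R) -intrM ler_int.
  exists (1 - y%:~R / i%:~R), ((y%:~R - 3 * r%:~R) / i%:~R), (3 * r%:~R / i%:~R).
  split; [split|split] => /=.
  - rewrite subr_ge0 ler_pdivrMr // mul1r; lra.
  - apply: divr_ge0; lra.
  - apply: divr_ge0; lra.
  - by field; rewrite gt_eqF.
  - rewrite hr; by field; rewrite gt_eqF.
  - by field; rewrite gt_eqF.
move=> hcond x y [l1 [l2 [l3 [[g1 g2 g3 gs] [/= ex ey]]]]] hxy.
have hr : ((3 * (x*i - y*k))%:~R : rat) = l3 * i%:~R.
  by rewrite intrM intrB !intrM ex ey; field.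
have Yl : (y%:~R : rat) = (l2 + l3) * i%:~R by rewrite ey; ring.
have h0 : 0 <= 3 * (x*i - y*k).
  by rewrite -(ler_int rat) hr; apply: mulr_ge0; lra.
have h1 : 3 * (x*i - y*k) <= y.
  rewrite -(ler_int rat) hr Yl; nra.
have y0 : 0 <= y by rewrite -(ler_int rat) Yl; nra.
have yI : y <= i by rewrite -(ler_int rat) Yl; nra.
have [yz|yz] := eqVneq y 0.
  exfalso; apply: hxy; rewrite yz.
  have l0 : l2 + l3 = 0.
    have : ((l2 + l3) * i%:~R : rat) = 0 by rewrite -Yl yz.
    by move/eqP; rewrite mulf_eq0 (gt_eqF Ip) orbF => /eqP.
  have l20 : l2 = 0 by lra.
  have l30 : l3 = 0 by lra.
  have : (x%:~R : rat) = 0 by rewrite ex l20 l30; ring.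
  by move/eqP; rewrite intr_eq0 => /eqP ->.
have [yi|yi] := eqVneq y i => //.
exfalso; apply: (@int_canon k i x y hi hcond) => //; lia.
Qed.
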